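(* Let $X,Y$ be real Banach spaces. Assume that $Y$ has octahedral norm and that there exists $f\in S_{X^*}$ such that $n(X^*,f)=1$. Let $H$ be a closed subspace of $L(X,Y)$ such that $X^*\otimes Y\subseteq H$. Then $H$ has octahedral norm.
   Context: The norm of a Banach space $Z$ is octahedral if for every finite-dimensional subspace $E$ of $Z$ and every $\varepsilon>0$ there is $y\in S_Z$ with $\|x+\lambda y\|\ge(1-\varepsilon)(\|x\|+|\lambda|)$ for all $x\in E$ and scalars $\lambda$. For a Banach space $Z$ and $u\in S_Z$, let $D(Z,u)=\{\varphi\in B_{Z^*}:\varphi(u)=1\}$ and let $n(Z,u)$ be the largest $k\ge0$ such that $k\|z\|\le\sup\{|\varphi(z)|:\varphi\in D(Z,u)\}$ for all $z\in Z$ (here applied with $Z=X^*$, $u=f$, so $\varphi$ ranges over $B_{X^{**}}$). $L(X,Y)$ is the space of bounded linear operators with operator norm; $X^*\otimes Y$ is the space of finite-rank operators spanned by $x\mapsto x^*(x)y$. *)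

(* Defs.v *)
From Stdlib Require Import Reals Lra List Classical ClassicalEpsilon.
Open Scope R_scope.
Set Implicit Arguments.

(** Supremum of a set of reals (0 if the set is empty or unbounded above). *)
Definition Rsup (A : R -> Prop) : R :=
  match excluded_middle_informative (bound A /\ exists x, A x) with
  | left h => proj1_sig (completeness A (proj1 h) (proj2 h))
  | right _ => 0
  end.

Record NormedSpace := {
  car :> Type;
  vzero : car;
  vadd : car -> car -> car;
  vopp : car -> car;
  vscal : R -> car -> car;
  vnorm : car -> R;
  vadd_assoc : forall x y z, vadd x (vadd y z) = vadd (vadd x y) z;
  vadd_comm : forall x y, vadd x y = vadd y x;
  vadd_zero : forall x, vadd x vzero = x;
  vadd_opp : forall x, vadd x (vopp x) = vzero;
  vscal_one : forall x, vscal 1 x = x;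
  vscal_assoc : forall a b x, vscal a (vscal b x) = vscal (a * b) x;
  vscal_addl : forall a b x, vscal (a + b) x = vadd (vscal a x) (vscal b x);
  vscal_addr : forall a x y, vscal a (vadd x y) = vadd (vscal a x) (vscal a y);
  vnorm_eq0 : forall x, vnorm x = 0 -> x = vzero;
  vnorm_scal : forall a x, vnorm (vscal a x) = Rabs a * vnorm x;
  vnorm_triangle : forall x y, vnorm (vadd x y) <= vnorm x + vnorm y
}.

Definition vsub (X : NormedSpace) (x y : X) : X := vadd X x (vopp X y).

Definition Banach (X : NormedSpace) : Prop :=
  forall u : nat -> X,
    (forall eps, eps > 0 -> exists N, forall n m, (n >= N)%nat -> (m >= N)%nat ->
        vnorm X (vsub X (u n) (u m)) < eps) ->
    exists l : X, Un_cv (fun n => vnorm X (vsub X (u n) l)) 0.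

Definition is_linear (X Y : NormedSpace) (T : X -> Y) : Prop :=
  forall a b x y, T (vadd X (vscal X a x) (vscal X b y)) =
                  vadd Y (vscal Y a (T x)) (vscal Y b (T y)).

Definition bounded_linear (X Y : NormedSpace) (T : X -> Y) : Prop :=
  is_linear X Y T /\ exists M, forall x, vnorm Y (T x) <= M * vnorm X x.

Definition opnorm (X Y : NormedSpace) (T : X -> Y) : R :=
  Rsup (fun r => exists x : X, vnorm X x <= 1 /\ r = vnorm Y (T x)).

Definition is_dual (X : NormedSpace) (g : X -> R) : Prop :=
  (forall a b x y, g (vadd X (vscal X a x) (vscal X b y)) = a * g x + b * g y) /\
  exists M, forall x, Rabs (g x) <= M * vnorm X x.

Definition dnorm (X : NormedSpace) (g : X -> R) : R :=
  Rsup (fun r => exists x : X, vnorm X x <= 1 /\ r = Rabs (g x)).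

Definition bidual_ball (X : NormedSpace) (phi : (X -> R) -> R) : Prop :=
  (forall a b g h, is_dual X g -> is_dual X h ->
     phi (fun x => a * g x + b * h x) = a * phi g + b * phi h) /\
  (forall g, is_dual X g -> Rabs (phi g) <= dnorm X g).

(** n(X^*, f) for f in S_{X^*}: largest k >= 0 with
    k ||z|| <= sup { |phi z| : phi in D(X^*, f) } for all z in X^*. *)
Definition numidx_dual (X : NormedSpace) (f : X -> R) : R :=
  Rsup (fun k => 0 <= k /\
    forall z, is_dual X z ->
      k * dnorm X z <= Rsup (fun r => exists phi, bidual_ball X phi /\ phi f = 1 /\
                                              r = Rabs (phi z))).

(** Octahedrality of a subspace H (with norm nrm) of a vector space V.
    A finite-dimensional subspace E of H is the span of a finite list of elements of H. *)
Definition in_span (V : Type) (zero : V) (add : V -> V -> V) (scal : R -> V -> V)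
  (l : list V) (x : V) : Prop :=
  exists cv : list (R * V), Forall (fun p => In (snd p) l) cv /\
    x = fold_right (fun p acc => add (scal (fst p) (snd p)) acc) zero cv.

Definition octahedral_in (V : Type) (zero : V) (add : V -> V -> V) (scal : R -> V -> V)
  (nrm : V -> R) (H : V -> Prop) : Prop :=
  forall (l : list V) (eps : R), Forall H l -> eps > 0 ->
    exists y, H y /\ nrm y = 1 /\
      forall x lam, in_span zero add scal l x ->
        nrm (add x (scal lam y)) >= (1 - eps) * (nrm x + Rabs lam).

Definition octahedral (X : NormedSpace) : Prop :=
  octahedral_in (vzero X) (vadd X) (vscal X) (vnorm X) (fun _ => True).

Definition op_zero (X Y : NormedSpace) : X -> Y := fun _ => vzero Y.
Definition op_add (X Y : NormedSpace) (S T : X -> Y) : X -> Y :=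
  fun x => vadd Y (S x) (T x).
Definition op_scal (X Y : NormedSpace) (a : R) (T : X -> Y) : X -> Y :=
  fun x => vscal Y a (T x).

Definition closed_subspace_L (X Y : NormedSpace) (H : (X -> Y) -> Prop) : Prop :=
  (forall T, H T -> bounded_linear X Y T) /\
  H (op_zero X Y) /\
  (forall S T, H S -> H T -> H (op_add X Y S T)) /\
  (forall a T, H T -> H (op_scal X Y a T)) /\
  (forall (Tn : nat -> X -> Y) (T : X -> Y),
     (forall n, H (Tn n)) -> bounded_linear X Y T ->
     Un_cv (fun n => opnorm X Y (fun x => vsub Y (Tn n x) (T x))) 0 -> H T).

(** X^* ⊗ Y: finite sums of rank-one operators x |-> g(x) y with g in X^*. *)
Definition in_tensor (X Y : NormedSpace) (T : X -> Y) : Prop :=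
  exists l : list ((X -> R) * Y),
    Forall (fun p => is_dual X (fst p)) l /\
    forall x, T x = fold_right (fun p acc => vadd Y (vscal Y (fst p x) (snd p)) acc)
                               (vzero Y) l.

(* Main.v *)
Require Import Defs.
From Stdlib Require Import Reals List Lra Classical ClassicalEpsilon FunctionalExtensionality ProofIrrelevance.
From mathcomp Require classical_sets.
Open Scope R_scope.

Section NS.
Variable V : NormedSpace.
Local Notation "x '+v' y" := (vadd V x y) (at level 50, left associativity).
Local Notation "a '*v' x" := (vscal V a x) (at level 40, left associativity).
Local Notation "0v" := (vzero V).
Local Notation nm := (vnorm V).

Lemma vadd_0l x : 0v +v x = x.
Proof. rewrite vadd_comm; apply vadd_zero. Qed.

Lemma vadd_cancel_l a x y : a +v x = a +v y -> x = y.
Proof.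
  intros h. assert (e: vopp V a +v (a +v x) = vopp V a +v (a +v y)) by now rewrite h.
  rewrite !vadd_assoc, (vadd_comm _ (vopp V a) a), vadd_opp, !vadd_0l in e. exact e.
Qed.

Lemma vscal_0 x : 0 *v x = 0v.
Proof.
  apply (vadd_cancel_l (0 *v x)). rewrite vadd_zero, <- vscal_addl. f_equal. ring.
Qed.

Lemma vscal_z a : a *v 0v = 0v.
Proof. pose proof (vscal_assoc V a 0 0v) as e. rewrite (vscal_0 0v) in e. rewrite e.
  replace (a*0) with 0 by ring. apply vscal_0. Qed.

Lemma vopp_eq x : vopp V x = (-1) *v x.
Proof.
  apply (vadd_cancel_l x). rewrite vadd_opp. rewrite <- (vscal_one _ x) at 1.
  rewrite <- vscal_addl. replace (1 + -1) with 0 by ring. now rewrite vscal_0.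
Qed.

Lemma vnorm_0 : nm (0v) = 0.
Proof. rewrite <- (vscal_0 0v), vnorm_scal, Rabs_R0. ring. Qed.

Lemma vnorm_opp x : nm (vopp V x) = nm (x).
Proof. rewrite vopp_eq, vnorm_scal. replace (Rabs (-1)) with 1. ring. unfold Rabs; destruct Rcase_abs; lra. Qed.

Lemma vnorm_ge0 x : 0 <= nm (x).
Proof.
  pose proof (vnorm_triangle V x (vopp V x)) as h.
  rewrite vadd_opp, vnorm_0, vnorm_opp in h. lra.
Qed.

Lemma vsub_add x y : vsub V x y +v y = x.
Proof. unfold vsub. rewrite <- vadd_assoc, (vadd_comm _ (vopp V y)), vadd_opp. apply vadd_zero. Qed.

Lemma vnorm_rev x y : nm (x) - nm (y) <= nm (vsub V x y).
Proof.
  pose proof (vnorm_triangle V (vsub V x y) y) as h. rewrite vsub_add in h. lra.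
Qed.

Lemma vsub_sym_norm x y : nm (vsub V x y) = nm (vsub V y x).
Proof.
  rewrite <- vnorm_opp. f_equal. apply (vadd_cancel_l (vsub V x y)).
  rewrite vadd_opp. unfold vsub. rewrite <- vadd_assoc, (vadd_assoc _ (vopp V y)), (vadd_comm _ (vopp V y) y),
   vadd_opp, vadd_0l, vadd_opp. reflexivity.
Qed.

Lemma vsub_eq x y : vsub V x y = x +v (-1) *v y.
Proof. unfold vsub. now rewrite vopp_eq. Qed.

Lemma vadd_swap4 a b c d : (a +v b) +v (c +v d) = (a +v c) +v (b +v d).
Proof.
  rewrite !vadd_assoc. f_equal. rewrite <- !vadd_assoc. f_equal. apply vadd_comm.
Qed.

Lemma vnorm_triangle3 x y z : nm (x +v y +v z) <= nm (x) + nm (y) + nm (z).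
Proof. pose proof (vnorm_triangle V (x +v y) z). pose proof (vnorm_triangle V x y). lra. Qed.

End NS.

Lemma Rsup_spec (A : R -> Prop) : bound A -> (exists x, A x) -> is_lub A (Rsup A).
Proof.
  intros hb hn. unfold Rsup. destruct excluded_middle_informative as [h|h].
  - destruct (completeness A _ _) as [m hm]. exact hm.
  - exfalso; tauto.
Qed.

Lemma Rsup_ub (A : R -> Prop) x : bound A -> A x -> x <= Rsup A.
Proof. intros hb hx. apply (Rsup_spec A hb (ex_intro _ x hx)). exact hx. Qed.

Lemma Rsup_le (A : R -> Prop) M : (exists x, A x) -> (forall x, A x -> x <= M) -> Rsup A <= M.
Proof. intros hn hM. apply (Rsup_spec A (ex_intro _ M hM) hn). exact hM. Qed.

Lemma Rsup_approx (A : R -> Prop) eps : bound A -> (exists x, A x) -> eps > 0 ->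
  exists x, A x /\ x > Rsup A - eps.
Proof.
  intros hb hn he. destruct (classic (exists x, A x /\ x > Rsup A - eps)) as [h|h]; auto.
  exfalso. assert (Rsup A <= Rsup A - eps).
  { apply (Rsup_spec A hb hn). intros x hx. destruct (Rle_dec x (Rsup A - eps)); auto.
    exfalso; apply h; exists x; split; auto; lra. }
  lra.
Qed.

Lemma Rsup_default (A : R -> Prop) : ~ (bound A /\ exists x, A x) -> Rsup A = 0.
Proof. intros h. unfold Rsup. destruct excluded_middle_informative; tauto. Qed.

Section Op.
Variables X Y : NormedSpace.

Lemma lin_zero T : is_linear X Y T -> T (vzero X) = vzero Y.
Proof.
  intros h. pose proof (h 0 0 (vzero X) (vzero X)) as e.
  rewrite !vscal_0, !vadd_zero in e. exact e.
Qed.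

Lemma lin_scal T a x : is_linear X Y T -> T (vscal X a x) = vscal Y a (T x).
Proof.
  intros h. pose proof (h a 0 x x) as e. rewrite !vscal_0, !vadd_zero in e. exact e.
Qed.

Lemma lin_add T x y : is_linear X Y T -> T (vadd X x y) = vadd Y (T x) (T y).
Proof.
  intros h. pose proof (h 1 1 x y) as e. rewrite !vscal_one in e. exact e.
Qed.

Lemma opnorm_bound_set T : bounded_linear X Y T ->
  bound (fun r => exists x : X, vnorm X x <= 1 /\ r = vnorm Y (T x)).
Proof.
  intros [hl [M hM]]. exists (Rabs M). intros r [x [hx ->]].
  eapply Rle_trans; [apply hM|]. pose proof (vnorm_ge0 X x).
  apply Rle_trans with (Rabs M * vnorm X x).
  - apply Rmult_le_compat_r; auto. apply Rle_abs.
  - pose proof (Rabs_pos M). nra.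
Qed.

Lemma opnorm_ub T x : bounded_linear X Y T -> vnorm X x <= 1 -> vnorm Y (T x) <= opnorm X Y T.
Proof. intros h hx. apply Rsup_ub. now apply opnorm_bound_set. exists x; auto. Qed.

Lemma opnorm_le T M : (forall x, vnorm X x <= 1 -> vnorm Y (T x) <= M) -> opnorm X Y T <= M.
Proof.
  intros h. apply Rsup_le.
  - exists (vnorm Y (T (vzero X))). exists (vzero X). rewrite vnorm_0. split; auto; lra.
  - intros r [x [hx ->]]. auto.
Qed.

Lemma opnorm_ge0 T : bounded_linear X Y T -> 0 <= opnorm X Y T.
Proof.
  intros h. eapply Rle_trans; [apply (vnorm_ge0 Y (T (vzero X)))|]. apply opnorm_ub; auto.
  rewrite vnorm_0; lra.
Qed.

Lemma opnorm_approx T eps : bounded_linear X Y T -> eps > 0 ->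
  exists x, vnorm X x <= 1 /\ vnorm Y (T x) > opnorm X Y T - eps.
Proof.
  intros h he. destruct (Rsup_approx _ eps (opnorm_bound_set T h)) as [r [[x [hx ->]] hr]]; auto.
  - exists (vnorm Y (T (vzero X))). exists (vzero X). rewrite vnorm_0. split; auto; lra.
  - exists x; auto.
Qed.

Lemma opnorm_bound T x : bounded_linear X Y T -> vnorm Y (T x) <= opnorm X Y T * vnorm X x.
Proof.
  intros h. pose proof (vnorm_ge0 X x) as h0. destruct (Req_dec (vnorm X x) 0) as [e|ne].
  - apply vnorm_eq0 in e. subst x. rewrite (lin_zero T (proj1 h)), !vnorm_0, Rmult_0_r. lra.
  - set (n := vnorm X x) in *. assert (np : n > 0) by lra.
    assert (ex : x = vscal X n (vscal X (/n) x)).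
    { rewrite vscal_assoc. replace (n * / n) with 1 by (field; lra). now rewrite vscal_one. }
    rewrite ex at 1. rewrite (lin_scal T _ _ (proj1 h)), vnorm_scal, Rabs_right by lra.
    assert (vnorm Y (T (vscal X (/ n) x)) <= opnorm X Y T).
    { apply opnorm_ub; auto. rewrite vnorm_scal, Rabs_right.
      - fold n. rewrite Rinv_l; lra.
      - left. apply Rinv_0_lt_compat; lra. }
    nra.
Qed.

Lemma opnorm_le_lin T M : bounded_linear X Y T -> 0 <= M -> (forall x, vnorm Y (T x) <= M * vnorm X x) ->
  opnorm X Y T <= M.
Proof.
  intros h hM hb. apply opnorm_le. intros x hx. eapply Rle_trans; [apply hb|]. nra.
Qed.

Lemma op_add_bl S T : bounded_linear X Y S -> bounded_linear X Y T -> bounded_linear X Y (op_add X Y S T).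
Proof.
  intros [hS [M hM]] [hT [N hN]]. split.
  - intros a b x y. unfold op_add. rewrite hS, hT. rewrite (vadd_swap4 Y), <- !vscal_addr. reflexivity.
  - exists (M + N). intros x. unfold op_add. eapply Rle_trans; [apply vnorm_triangle|].
    specialize (hM x); specialize (hN x). lra.
Qed.

Lemma op_scal_bl a T : bounded_linear X Y T -> bounded_linear X Y (op_scal X Y a T).
Proof.
  intros [hT [M hM]]. split.
  - intros c b x y. unfold op_scal. rewrite hT, vscal_addr, !vscal_assoc. f_equal; f_equal; ring.
  - exists (Rabs a * M). intros x. unfold op_scal. rewrite vnorm_scal. specialize (hM x).
    pose proof (Rabs_pos a). rewrite Rmult_assoc. apply Rmult_le_compat_l; auto.
Qed.

Lemma opnorm_triangle S T : bounded_linear X Y S -> bounded_linear X Y T ->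
  opnorm X Y (op_add X Y S T) <= opnorm X Y S + opnorm X Y T.
Proof.
  intros hS hT. apply opnorm_le. intros x hx. unfold op_add.
  eapply Rle_trans; [apply vnorm_triangle|].
  pose proof (opnorm_ub S x hS hx). pose proof (opnorm_ub T x hT hx). lra.
Qed.

Lemma opnorm_scal a T : bounded_linear X Y T -> opnorm X Y (op_scal X Y a T) = Rabs a * opnorm X Y T.
Proof.
  intros h. apply Rle_antisym.
  - apply opnorm_le. intros x hx. unfold op_scal. rewrite vnorm_scal.
    apply Rmult_le_compat_l. apply Rabs_pos. apply opnorm_ub; auto.
  - destruct (Req_dec a 0) as [->|na].
    + rewrite Rabs_R0, Rmult_0_l. apply opnorm_ge0. apply op_scal_bl; auto.
    + assert (opnorm X Y T <= Rabs (/a) * opnorm X Y (op_scal X Y a T)).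
      { apply opnorm_le. intros x hx.
        replace (T x) with (vscal Y (/a) (op_scal X Y a T x)).
        - rewrite vnorm_scal. apply Rmult_le_compat_l. apply Rabs_pos. apply opnorm_ub; auto.
          apply op_scal_bl; auto.
        - unfold op_scal. rewrite vscal_assoc. replace (/a * a) with 1 by (field; auto). apply vscal_one. }
      rewrite Rabs_inv in H. pose proof (Rabs_pos_lt a na).
      apply (Rmult_le_compat_l (Rabs a)) in H; [|lra].
      rewrite <- Rmult_assoc, Rinv_r, Rmult_1_l in H; lra.
Qed.

Lemma opnorm_zero_eq T : bounded_linear X Y T -> opnorm X Y T = 0 -> forall x, T x = vzero Y.
Proof.
  intros h e x. apply vnorm_eq0. pose proof (opnorm_bound T x h). rewrite e in H.
  pose proof (vnorm_ge0 Y (T x)). lra.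
Qed.

End Op.

Definition RN : NormedSpace.
Proof.
  refine (@Build_NormedSpace R 0 Rplus Ropp Rmult Rabs _ _ _ _ _ _ _ _ _ _ _).
  - intros; ring. - intros; ring. - intros; ring. - intros; ring. - intros; ring.
  - intros; ring. - intros; ring. - intros; ring.
  - intros x h. destruct (Req_dec x 0); auto. exfalso. apply Rabs_no_R0 in H. auto.
  - intros; apply Rabs_mult.
  - intros; apply Rabs_triang.
Defined.

Lemma dual_bl X g : is_dual X g <-> bounded_linear X RN g.
Proof. reflexivity. Qed.
Lemma dnorm_op X g : dnorm X g = opnorm X RN g.
Proof. reflexivity. Qed.

Lemma sig_eq {A} (P : A -> Prop) (a b : sig P) : proj1_sig a = proj1_sig b -> a = b.
Proof. destruct a, b; simpl; intros ->. f_equal. apply proof_irrelevance. Qed.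

Section OpSpace.
Variables X Y : NormedSpace.
Definition BL := {T : X -> Y | bounded_linear X Y T}.
Definition bl_zero : BL.
Proof. exists (op_zero X Y). split.
  - intros a b x y. unfold op_zero. rewrite !vscal_z. symmetry; apply vadd_zero.
  - exists 0. intros; unfold op_zero. rewrite vnorm_0. lra. Defined.
Definition bl_add (S T : BL) : BL := exist _ _ (op_add_bl X Y _ _ (proj2_sig S) (proj2_sig T)).
Definition bl_scal (a : R) (T : BL) : BL := exist _ _ (op_scal_bl X Y a _ (proj2_sig T)).
Definition bl_opp (T : BL) : BL := bl_scal (-1) T.
Definition bl_norm (T : BL) : R := opnorm X Y (proj1_sig T).

Definition OpSpace : NormedSpace.
Proof.
  refine (@Build_NormedSpace BL bl_zero bl_add bl_opp bl_scal bl_norm _ _ _ _ _ _ _ _ _ _ _).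
  - intros [a pa] [b pb] [c pc]. apply sig_eq; simpl. apply functional_extensionality; intros x.
    unfold op_add. apply vadd_assoc.
  - intros [a pa] [b pb]. apply sig_eq; simpl. apply functional_extensionality; intros x.
    unfold op_add. apply vadd_comm.
  - intros [a pa]. apply sig_eq; simpl. apply functional_extensionality; intros x.
    unfold op_add, op_zero. apply vadd_zero.
  - intros [a pa]. apply sig_eq; simpl. apply functional_extensionality; intros x.
    unfold op_add, op_zero, op_scal. rewrite <- vopp_eq. apply vadd_opp.
  - intros [a pa]. apply sig_eq; simpl. apply functional_extensionality; intros x.
    unfold op_scal. apply vscal_one.
  - intros u v [a pa]. apply sig_eq; simpl. apply functional_extensionality; intros x.
    unfold op_scal. apply vscal_assoc.
  - intros u v [a pa]. apply sig_eq; simpl. apply functional_extensionality; intros x.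
    unfold op_scal, op_add. apply vscal_addl.
  - intros u [a pa] [b pb]. apply sig_eq; simpl. apply functional_extensionality; intros x.
    unfold op_scal, op_add. apply vscal_addr.
  - intros [a ha] e. apply sig_eq; simpl. apply functional_extensionality; intros x.
    unfold op_zero. apply (opnorm_zero_eq X Y a ha e).
  - intros u [a ha]. unfold bl_norm, bl_scal; simpl. apply opnorm_scal; auto.
  - intros [a ha] [b hb]. unfold bl_norm, bl_add; simpl. apply opnorm_triangle; auto.
Defined.
End OpSpace.

Section HB.
Variable X : NormedSpace.
Local Notation "x '+v' y" := (vadd X x y) (at level 50, left associativity).
Local Notation "a '*v' x" := (vscal X a x) (at level 40, left associativity).
Variable p : X -> R.
Hypothesis p_add : forall x y, p (x +v y) <= p x + p y.
Hypothesis p_scal : forall a x, p (a *v x) = Rabs a * p x.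
Variable x0 : X.

Lemma p_ge0 x : 0 <= p x.
Proof.
  pose proof (p_add x ((-1) *v x)) as h. rewrite <- vopp_eq, vadd_opp in h.
  rewrite <- (vscal_0 X x0), p_scal, Rabs_R0 in h. rewrite vopp_eq, p_scal in h.
  replace (Rabs (-1)) with 1 in h by (unfold Rabs; destruct Rcase_abs; lra). lra.
Qed.

Definition valid (e : (X -> Prop) * (X -> R)) : Prop :=
  fst e x0 /\ snd e x0 = p x0 /\
  (forall a b x y, fst e x -> fst e y -> fst e (a *v x +v b *v y) /\
       snd e (a *v x +v b *v y) = a * snd e x + b * snd e y) /\
  (forall x, fst e x -> snd e x <= p x).

Lemma valid_0 e : valid e -> fst e (vzero X).
Proof.
  intros [h0 [_ [hl _]]]. destruct (hl 0 0 x0 x0 h0 h0) as [h _].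
  rewrite vscal_0, vadd_zero in h. exact h.
Qed.

Lemma valid_scal e a x : valid e -> fst e x -> fst e (a *v x) /\ snd e (a *v x) = a * snd e x.
Proof.
  intros hv hx. destruct hv as [_ [_ [hl _]]]. destruct (hl a 0 x x hx hx) as [h1 h2].
  rewrite vscal_0, vadd_zero in h1, h2. split; auto. rewrite h2; ring.
Qed.

Lemma valid_add e x y : valid e -> fst e x -> fst e y -> fst e (x +v y) /\ snd e (x +v y) = snd e x + snd e y.
Proof.
  intros hv hx hy. destruct hv as [_ [_ [hl _]]]. destruct (hl 1 1 x y hx hy) as [h1 h2].
  rewrite !vscal_one in h1, h2. split; auto. rewrite h2; ring.
Qed.

Lemma move_r a b c : a +v b = c -> a = c +v (-1) *v b.
Proof.
  intros h. rewrite <- h, <- vadd_assoc, <- vopp_eq, vadd_opp, vadd_zero. reflexivity.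
Qed.

Lemma comb2 a b y1 t1 y2 t2 z :
  a *v (y1 +v t1 *v z) +v b *v (y2 +v t2 *v z) = (a *v y1 +v b *v y2) +v (a * t1 + b * t2) *v z.
Proof.
  rewrite !vscal_addr, !vscal_assoc, vscal_addl. apply vadd_swap4.
Qed.

Section OneStep.
Variable D : X -> Prop.
Variable g : X -> R.
Hypothesis hv : valid (D, g).
Variable z : X.
Hypothesis hz : ~ D z.

Lemma decomp_unique y t y' t' : D y -> D y' -> y +v t *v z = y' +v t' *v z -> y = y' /\ t = t'.
Proof.
  intros hy hy' e. apply move_r in e.
  assert (e2 : y = y' +v (t' - t) *v z).
  { rewrite e, <- vadd_assoc, vscal_assoc, <- vscal_addl. f_equal. f_equal. ring. }
  destruct (Req_dec t t') as [<-|ne].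
  - split; auto. rewrite e2. replace (t - t) with 0 by ring. rewrite vscal_0. apply vadd_zero.
  - exfalso. apply hz.
    assert (e3 : (t' - t) *v z = y +v (-1) *v y').
    { rewrite e2. rewrite (vadd_comm _ y'), <- vadd_assoc, <- vopp_eq, vadd_opp, vadd_zero. reflexivity. }
    assert (e4 : z = (/ (t' - t)) *v y +v (- / (t' - t)) *v y').
    { replace (- / (t' - t)) with (/ (t' - t) * -1) by ring. rewrite <- vscal_assoc, <- vscal_addr, <- e3.
      rewrite vscal_assoc. replace (/ (t' - t) * (t' - t)) with 1 by (field; lra). now rewrite vscal_one. }
    rewrite e4. apply (proj1 (proj2 (proj2 hv))); auto.
Qed.

Definition Aset (r : R) := exists y, D y /\ r = g y - p (y +v (-1) *v z).

Lemma Aset_bound y y' : D y -> D y' -> g y - p (y +v (-1) *v z) <= p (y' +v z) - g y'.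
Proof.
  intros hy hy'. destruct (valid_add (D,g) y y' hv hy hy') as [hs he]. simpl in hs, he.
  pose proof (proj2 (proj2 (proj2 hv)) _ hs) as hd. simpl in hd. rewrite he in hd.
  assert (ee : y +v y' = (y +v (-1) *v z) +v (y' +v z)).
  { rewrite vadd_swap4. rewrite <- (vscal_one X z) at 2. rewrite <- vscal_addl.
    replace (-1 + 1) with 0 by ring. rewrite vscal_0, vadd_zero. reflexivity. }
  rewrite ee in hd. pose proof (p_add (y +v (-1) *v z) (y' +v z)). lra.
Qed.

Definition cval := Rsup Aset.

Lemma cval_spec y : D y -> g y - p (y +v (-1) *v z) <= cval /\ cval <= p (y +v z) - g y.
Proof.
  intros hy. assert (hb : bound Aset).
  { exists (p (y +v z) - g y). intros r [y1 [h1 ->]]. apply Aset_bound; auto. }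
  assert (hn : exists r, Aset r) by (exists (g y - p (y +v (-1) *v z)); exists y; auto).
  split.
  - apply Rsup_ub; auto. exists y; auto.
  - apply Rsup_le; auto. intros r [y1 [h1 ->]]. apply Aset_bound; auto.
Qed.

Definition D' (w : X) := exists y t, D y /\ w = y +v t *v z.
Definition pick (w : X) : X * R :=
  epsilon (inhabits (vzero X, 0)) (fun q => D (fst q) /\ w = fst q +v snd q *v z).
Definition g' (w : X) := g (fst (pick w)) + snd (pick w) * cval.

Lemma g'_eq y t : D y -> g' (y +v t *v z) = g y + t * cval.
Proof.
  intros hy. unfold g'.
  assert (hs : D (fst (pick (y +v t *v z))) /\ y +v t *v z = fst (pick (y +v t *v z)) +v snd (pick (y +v t *v z)) *v z).
  { unfold pick. apply epsilon_spec. exists (y, t); simpl; auto. }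
  destruct hs as [h1 h2]. destruct (decomp_unique _ _ _ _ hy h1 h2) as [<- <-]. reflexivity.
Qed.

Lemma dom_ext y t : D y -> g y + t * cval <= p (y +v t *v z).
Proof.
  intros hy. destruct (Rtotal_order t 0) as [tn|[t0|tp]].
  - set (s := - t). assert (sp : s > 0) by (unfold s; lra).
    destruct (valid_scal (D,g) (/s) y hv hy) as [h1 h2]. simpl in h1, h2.
    destruct (cval_spec _ h1) as [c1 _].
    assert (ee : y +v t *v z = s *v ((/s) *v y +v (-1) *v z)).
    { rewrite vscal_addr, !vscal_assoc. replace (s * / s) with 1 by (field; lra).
      rewrite vscal_one. f_equal. f_equal. unfold s; ring. }
    rewrite ee, p_scal, Rabs_right by lra. rewrite h2 in c1.
    set (q := p _) in *. assert (hm : s * (/s * g y - q) <= s * cval) by (apply Rmult_le_compat_l; lra).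
    replace (s * (/s * g y - q)) with (g y - s * q) in hm by (field; lra).
    replace (t * cval) with (- (s * cval)) by (unfold s; ring). lra.
  - subst t. rewrite vscal_0, vadd_zero, Rmult_0_l, Rplus_0_r. apply (proj2 (proj2 (proj2 hv))); auto.
  - destruct (valid_scal (D,g) (/t) y hv hy) as [h1 h2]. simpl in h1, h2.
    destruct (cval_spec _ h1) as [_ c2].
    assert (ee : y +v t *v z = t *v ((/t) *v y +v z)).
    { rewrite vscal_addr, !vscal_assoc. replace (t * / t) with 1 by (field; lra).
      rewrite vscal_one. reflexivity. }
    rewrite ee, p_scal, Rabs_right by lra. rewrite h2 in c2.
    set (q := p _) in *. assert (hm : t * cval <= t * (q - / t * g y)) by (apply Rmult_le_compat_l; lra).
    replace (t * (q - /t * g y)) with (t * q - g y) in hm by (field; lra). lra.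
Qed.

Lemma ext_valid : valid (D', g').
Proof.
  destruct hv as [h0 [hg0 [hl hd]]]. simpl in *.
  assert (hx0 : x0 = x0 +v 0 *v z) by (now rewrite vscal_0, vadd_zero).
  split; [|split; [|split]]; simpl.
  - exists x0, 0. auto.
  - rewrite hx0 at 1. rewrite g'_eq by auto. rewrite hg0. ring.
  - intros a b x y [y1 [t1 [hy1 ->]]] [y2 [t2 [hy2 ->]]]. rewrite comb2.
    destruct (hl a b y1 y2 hy1 hy2) as [hs he]. split.
    + exists (a *v y1 +v b *v y2), (a * t1 + b * t2). auto.
    + rewrite !g'_eq by auto. rewrite he. ring.
  - intros x [y [t [hy ->]]]. rewrite g'_eq by auto. apply dom_ext; auto.
Qed.

Lemma ext_incl x : D x -> D' x /\ g' x = g x.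
Proof.
  intros hx. assert (e : x = x +v 0 *v z) by (now rewrite vscal_0, vadd_zero).
  split.
  - exists x, 0. auto.
  - rewrite e at 1. rewrite g'_eq by auto. ring.
Qed.

Lemma ext_z : D' z.
Proof. exists (vzero X), 1. split. apply (valid_0 _ hv). now rewrite vscal_one, vadd_0l. Qed.

End OneStep.

Definition D0 (w : X) := exists t, w = t *v x0.
Definition g0 (w : X) := epsilon (inhabits 0) (fun t => w = t *v x0) * p x0.

Lemma g0_eq t : g0 (t *v x0) = t * p x0.
Proof.
  unfold g0. pose proof (epsilon_spec (inhabits 0) (fun s => t *v x0 = s *v x0) (ex_intro _ t eq_refl)) as h.
  simpl in h. set (s := epsilon _ _) in *.
  destruct (Req_dec s t) as [->|ne]; auto.
  assert (x0 = vzero X).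
  { assert (e : (t + -1 * s) *v x0 = vzero X).
    { rewrite vscal_addl, <- vscal_assoc, h, <- vopp_eq, vadd_opp. reflexivity. }
    rewrite <- (vscal_one X x0), <- (Rinv_l (t + -1 * s)), <- vscal_assoc, e by lra. apply vscal_z. }
  assert (p x0 = 0).
  { rewrite H, <- (vscal_0 X (vzero X)), p_scal, Rabs_R0. ring. }
  rewrite H0; ring.
Qed.

Lemma valid_base : valid (D0, g0).
Proof.
  split; [|split; [|split]]; simpl.
  - exists 1. now rewrite vscal_one.
  - rewrite <- (vscal_one X x0) at 1. rewrite g0_eq. ring.
  - intros a b x y [t1 ->] [t2 ->]. rewrite !vscal_assoc, <- vscal_addl. split.
    + eexists; eauto.
    + rewrite !g0_eq. ring.
  - intros x [t ->]. rewrite g0_eq, p_scal. pose proof (p_ge0 x0).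
    pose proof (Rle_abs t). nra.
Qed.

Definition Ext := {e : (X -> Prop) * (X -> R) | valid e}.
Definition le_ext (s t : Ext) : Prop :=
  (forall x, fst (proj1_sig s) x -> fst (proj1_sig t) x) /\
  (forall x, fst (proj1_sig s) x -> snd (proj1_sig s) x = snd (proj1_sig t) x).
Definition Rel (s t : Ext) : bool := if excluded_middle_informative (le_ext s t) then true else false.

Lemma Rel_iff s t : is_true (Rel s t) <-> le_ext s t.
Proof. unfold Rel, is_true. destruct excluded_middle_informative; split; intros; try tauto; discriminate. Qed.

Definition base : Ext := exist _ _ valid_base.

Section Chain.
Variable A : Ext -> Prop.
Hypothesis tot : forall s t, A s -> A t -> le_ext s t \/ le_ext t s.
Variable s0 : Ext.
Hypothesis hs0 : A s0.

Definition DU (x : X) := exists s, A s /\ fst (proj1_sig s) x.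
Definition pickU (x : X) : Ext := epsilon (inhabits base) (fun s => A s /\ fst (proj1_sig s) x).
Definition gU (x : X) := snd (proj1_sig (pickU x)) x.

Lemma gU_eq s x : A s -> fst (proj1_sig s) x -> gU x = snd (proj1_sig s) x.
Proof.
  intros ha hx. unfold gU.
  assert (hp : A (pickU x) /\ fst (proj1_sig (pickU x)) x).
  { unfold pickU. apply epsilon_spec. exists s; auto. }
  destruct hp as [h1 h2]. destruct (tot _ _ ha h1) as [[_ e]|[_ e]].
  - symmetry; auto.
  - auto.
Qed.

Lemma validU : valid (DU, gU).
Proof.
  split; [|split; [|split]]; simpl.
  - exists s0. split; auto. apply (proj1 (proj2_sig s0)).
  - rewrite (gU_eq s0) by (auto; apply (proj1 (proj2_sig s0))). apply (proj2_sig s0).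
  - intros a b x y [s1 [h1 hx]] [s2 [h2 hy]].
    assert (exists s, A s /\ fst (proj1_sig s) x /\ fst (proj1_sig s) y) as [s [hs [hx' hy']]].
    { destruct (tot _ _ h1 h2) as [[i _]|[i _]]; [exists s2|exists s1]; auto. }
    destruct (proj1 (proj2 (proj2 (proj2_sig s))) a b x y hx' hy') as [hc he].
    split.
    + exists s; auto.
    + rewrite !(gU_eq s) by auto. exact he.
  - intros x [s [hs hx]]. rewrite (gU_eq s) by auto. apply (proj2 (proj2 (proj2 (proj2_sig s)))); auto.
Qed.

Lemma U_ub s : A s -> le_ext s (exist _ _ validU).
Proof.
  intros hs. split; simpl.
  - intros x hx. exists s; auto.
  - intros x hx. symmetry. apply gU_eq; auto.
Qed.
End Chain.

Theorem HB_ext : exists g : X -> R,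
  (forall a b x y, g (a *v x +v b *v y) = a * g x + b * g y) /\
  (forall x, g x <= p x) /\ g x0 = p x0.
Proof.
  destruct (@classical_sets.ZL_preorder Ext base Rel) as [m hm].
  - intros t. apply Rel_iff. split; auto.
  - intros r s t h1 h2. apply Rel_iff in h1, h2. apply Rel_iff. destruct h1 as [a1 b1], h2 as [a2 b2].
    split; auto. intros x hx. rewrite b1 by auto. apply b2; auto.
  - intros A hA. destruct (classic (exists s, A s)) as [[s0 hs0]|hne].
    + assert (tot : forall s t, A s -> A t -> le_ext s t \/ le_ext t s).
      { intros s t hs ht. destruct (hA s t hs ht) as [h|h]; [left|right]; apply Rel_iff; auto. }
      exists (exist _ _ (validU A tot s0 hs0)). intros s hs. apply Rel_iff. apply U_ub; auto.
    + exists base. intros s hs. exfalso. apply hne. eauto.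
  - destruct m as [[D g] hv]. simpl in *.
    assert (full : forall x, D x).
    { intros z. apply NNPP. intros hz.
      set (e' := exist valid _ (ext_valid D g hv z hz) : Ext).
      assert (h1 : is_true (Rel (exist _ _ hv) e')).
      { apply Rel_iff. split; simpl; intros x hx.
        - apply (ext_incl D g hv z hz x hx). - symmetry; apply (ext_incl D g hv z hz x hx). }
      apply hm in h1. apply Rel_iff in h1. apply hz. apply (proj1 h1). simpl. apply (ext_z D g hv z). }
    exists g. destruct hv as [h0 [hg0 [hl hd]]]. simpl in *. split; [|split]; auto.
    intros a b x y. apply hl; auto.
Qed.

End HB.

Lemma Rabs_m1 : Rabs (-1) = 1.
Proof. unfold Rabs; destruct Rcase_abs; lra. Qed.

Section Dual.
Variable X : NormedSpace.

Lemma dual_ub g x : is_dual X g -> vnorm X x <= 1 -> Rabs (g x) <= dnorm X g.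
Proof. intros h hx. apply (opnorm_ub X RN g x h hx). Qed.

Lemma dnorm_ge0 g : is_dual X g -> 0 <= dnorm X g.
Proof. intros h. apply (opnorm_ge0 X RN g h). Qed.

Lemma dnorm_le g M : (forall x, vnorm X x <= 1 -> Rabs (g x) <= M) -> dnorm X g <= M.
Proof. intros h. apply (opnorm_le X RN g M h). Qed.

Lemma dnorm_approx g eps : is_dual X g -> eps > 0 ->
  exists x, vnorm X x <= 1 /\ Rabs (g x) > dnorm X g - eps.
Proof. intros h he. apply (opnorm_approx X RN g eps h he). Qed.

Lemma dual_scal g a x : is_dual X g -> g (vscal X a x) = a * g x.
Proof. intros h. apply (lin_scal X RN g a x (proj1 h)). Qed.

Lemma dual_comb g1 g2 a b : is_dual X g1 -> is_dual X g2 -> is_dual X (fun x => a * g1 x + b * g2 x).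
Proof.
  intros [l1 [M1 h1]] [l2 [M2 h2]]. split.
  - intros c d x y. rewrite l1, l2. ring.
  - exists (Rabs a * M1 + Rabs b * M2). intros x. eapply Rle_trans; [apply Rabs_triang|].
    rewrite !Rabs_mult. specialize (h1 x); specialize (h2 x).
    pose proof (Rabs_pos a); pose proof (Rabs_pos b).
    assert (Rabs a * Rabs (g1 x) <= Rabs a * (M1 * vnorm X x)) by (apply Rmult_le_compat_l; auto).
    assert (Rabs b * Rabs (g2 x) <= Rabs b * (M2 * vnorm X x)) by (apply Rmult_le_compat_l; auto).
    nra.
Qed.
End Dual.

Section Norming.
Variables X Y : NormedSpace.

Lemma HB_op T x0 : bounded_linear X Y T ->
  exists g, is_dual X g /\ (forall x, Rabs (g x) <= vnorm Y (T x)) /\ g x0 = vnorm Y (T x0).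
Proof.
  intros hT. set (p := fun x => vnorm Y (T x)).
  assert (p_add : forall x y, p (vadd X x y) <= p x + p y).
  { intros x y. unfold p. rewrite (lin_add X Y T x y (proj1 hT)). apply vnorm_triangle. }
  assert (p_scal : forall a x, p (vscal X a x) = Rabs a * p x).
  { intros a x. unfold p. rewrite (lin_scal X Y T a x (proj1 hT)). apply vnorm_scal. }
  destruct (HB_ext X p p_add p_scal x0) as [g [hl [hd hg0]]].
  assert (habs : forall x, Rabs (g x) <= p x).
  { intros x. pose proof (hd x). pose proof (hd (vscal X (-1) x)) as h2.
    rewrite p_scal in h2. replace (Rabs (-1)) with 1 in h2 by (unfold Rabs; destruct Rcase_abs; lra).
    pose proof (hl (-1) 0 x x) as e. rewrite vscal_0, vadd_zero in e. rewrite e in h2.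
    unfold Rabs; destruct Rcase_abs; lra. }
  exists g. split; [|split]; auto.
  split; auto. exists (opnorm X Y T). intros x. eapply Rle_trans; [apply habs|]. apply opnorm_bound; auto.
Qed.

Variable f : X -> R.
Hypothesis hf : is_dual X f.
Hypothesis hf1 : dnorm X f = 1.
Hypothesis hn : numidx_dual X f = 1.

Definition inner (z : X -> R) (r : R) :=
  exists phi, bidual_ball X phi /\ phi f = 1 /\ r = Rabs (phi z).

Lemma numidx_extract g eta : is_dual X g -> eta > 0 ->
  exists phi, bidual_ball X phi /\ phi f = 1 /\ Rabs (phi g) >= dnorm X g - eta.
Proof.
  intros hg he.
  set (S := fun k => 0 <= k /\ forall z, is_dual X z -> k * dnorm X z <= Rsup (inner z)).
  assert (hn' : Rsup S = 1) by exact hn.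
  assert (hS : bound S /\ exists k, S k).
  { apply NNPP. intros c. rewrite (Rsup_default S c) in hn'. lra. }
  pose proof (dnorm_ge0 X g hg) as hg0.
  set (eps := Rmin (1/2) (eta / (2 * (dnorm X g + 1)))).
  assert (epsp : eps > 0).
  { unfold eps. apply Rmin_glb_lt; [lra|]. apply Rdiv_lt_0_compat; lra. }
  destruct (Rsup_approx S eps (proj1 hS) (proj2 hS) epsp) as [k [[hk0 hk] hk1]].
  rewrite hn' in hk1.
  assert (epsh : eps <= 1/2) by apply Rmin_l.
  assert (ibound : forall z, is_dual X z -> bound (inner z)).
  { intros z hz. exists (dnorm X z). intros r [phi [[_ hb] [_ ->]]]. apply hb; auto. }
  assert (hne : exists phi0, bidual_ball X phi0 /\ phi0 f = 1).
  { pose proof (hk f hf) as h. rewrite hf1 in h.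
    destruct (classic (exists r, inner f r)) as [[r [phi0 [h1 [h2 _]]]]|c].
    - exists phi0; auto.
    - rewrite Rsup_default in h by tauto. lra. }
  destruct hne as [phi0 [hb0 hp0]].
  assert (hneg : exists r, inner g r) by (exists (Rabs (phi0 g)); exists phi0; auto).
  destruct (Rsup_approx (inner g) (eta/2) (ibound g hg) hneg) as [r [[phi [h1 [h2 ->]]] hr]]; [lra|].
  exists phi. split; [|split]; auto.
  pose proof (hk g hg) as hkg.
  assert (eps * dnorm X g <= eta / 2).
  { assert (eps <= eta / (2 * (dnorm X g + 1))) by apply Rmin_r.
    apply Rle_trans with (eta / (2 * (dnorm X g + 1)) * (dnorm X g + 1)).
    - apply Rmult_le_compat; lra.
    - right. field. lra. }
  nra.
Qed.

Lemma norming T delta : bounded_linear X Y T -> delta > 0 ->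
  exists x, vnorm X x <= 1 /\ f x >= 1 - delta /\ vnorm Y (T x) >= opnorm X Y T - delta.
Proof.
  intros hT hd. set (e := delta / 3). assert (ep : e > 0) by (unfold e; lra).
  destruct (opnorm_approx X Y T e hT ep) as [x0 [hx0 hTx0]].
  destruct (HB_op T x0 hT) as [g [hg [hgT hgx0]]].
  assert (dg1 : dnorm X g >= vnorm Y (T x0)).
  { pose proof (dual_ub X g x0 hg hx0). rewrite hgx0 in H.
    pose proof (Rle_abs (vnorm Y (T x0))). lra. }
  assert (dg2 : dnorm X g <= opnorm X Y T).
  { apply dnorm_le. intros x hx. eapply Rle_trans; [apply hgT|]. apply opnorm_ub; auto. }
  destruct (numidx_extract g e hg ep) as [phi [[hpl hpb] [hpf hpg]]].
  set (sg := if Rle_dec 0 (phi g) then 1 else -1).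
  assert (hsg : sg * phi g = Rabs (phi g)).
  { unfold sg. destruct Rle_dec; unfold Rabs; destruct Rcase_abs; lra. }
  assert (hsgabs : Rabs sg = 1) by (unfold sg; destruct Rle_dec; unfold Rabs; destruct Rcase_abs; lra).
  set (h := fun x => 1 * f x + sg * g x).
  assert (hh : is_dual X h) by (apply dual_comb; auto).
  assert (phih : phi h = 1 + Rabs (phi g)).
  { unfold h. rewrite hpl by auto. rewrite hpf, hsg. ring. }
  assert (dh : dnorm X h >= 1 + Rabs (phi g)).
  { pose proof (hpb h hh). rewrite phih in H. pose proof (Rabs_pos (phi g)).
    rewrite Rabs_right in H by lra. lra. }
  destruct (dnorm_approx X h e hh ep) as [x1 [hx1 hhx1]].
  set (tau := if Rle_dec 0 (h x1) then 1 else -1).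
  set (x2 := vscal X tau x1).
  assert (hx2 : vnorm X x2 <= 1).
  { unfold x2. rewrite vnorm_scal. replace (Rabs tau) with 1. lra.
    unfold tau; destruct (Rle_dec 0 (h x1)). rewrite Rabs_R1; auto. rewrite Rabs_m1; auto. }
  assert (hhx2 : h x2 = Rabs (h x1)).
  { unfold x2. rewrite dual_scal by auto. unfold tau; destruct (Rle_dec 0 (h x1)).
    rewrite Rabs_right; lra. rewrite Rabs_left; lra. }
  assert (f2 : f x2 <= 1).
  { pose proof (dual_ub X f x2 hf hx2). rewrite hf1 in H. pose proof (Rle_abs (f x2)). lra. }
  assert (g2 : sg * g x2 <= dnorm X g).
  { pose proof (dual_ub X g x2 hg hx2).
    assert (sg * g x2 <= Rabs (sg * g x2)) by apply Rle_abs. rewrite Rabs_mult, hsgabs in H0. lra. }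
  assert (hsum : f x2 + sg * g x2 > 1 + dnorm X g - 2 * e).
  { assert (h x2 = f x2 + sg * g x2) by (unfold h; ring). lra. }
  exists x2. split; [|split]; auto.
  - unfold e in *. lra.
  - assert (sg * g x2 <= vnorm Y (T x2)).
    { eapply Rle_trans; [apply Rle_abs|]. rewrite Rabs_mult, hsgabs, Rmult_1_l. apply hgT. }
    unfold e in *. lra.
Qed.
End Norming.

Lemma grid_aux h : h > 0 -> forall n a, exists G : list R,
  forall t, a <= t <= a + INR n * h -> exists s, In s G /\ Rabs (t - s) <= h.
Proof.
  intros hp n. induction n as [|n IH]; intros a.
  - exists (a :: nil). intros t ht. simpl in ht. exists a. split; [left; auto|].
    replace (t - a) with 0 by lra. rewrite Rabs_R0; lra.
  - destruct (IH (a + h)) as [G hG]. exists (a :: G). intros t ht. rewrite S_INR in ht.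
    destruct (Rle_dec t (a + h)).
    + exists a. split; [left; auto|]. rewrite Rabs_right; lra.
    + destruct (hG t) as [s [hs hs2]]; [lra|]. exists s; split; auto. right; auto.
Qed.

Lemma grid K rho : rho > 0 -> exists G : list R,
  forall t, Rabs t <= K -> exists s, In s G /\ Rabs (t - s) < rho.
Proof.
  intros hr. destruct (INR_archimed (rho/2) (2 * Rabs K) ltac:(lra)) as [n hn].
  destruct (grid_aux (rho/2) ltac:(lra) n (- Rabs K)) as [G hG]. exists G.
  intros t ht. pose proof (Rle_abs K). pose proof (Rabs_pos K).
  destruct (hG t) as [s [hs hs2]].
  - pose proof (Rle_abs t). pose proof (Rle_abs (-t)). rewrite Rabs_Ropp in *. lra.
  - exists s. split; auto. lra.
Qed.

Section Span.
Variable V : NormedSpace.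
Local Notation "x '+v' y" := (vadd V x y) (at level 50, left associativity).
Local Notation "a '*v' x" := (vscal V a x) (at level 40, left associativity).
Local Notation nm := (vnorm V).
Local Notation "0v" := (vzero V).

Fixpoint spanL (l : list V) (w : V) : Prop :=
  match l with
  | nil => w = 0v
  | v :: l' => exists t u, spanL l' u /\ w = u +v t *v v
  end.

Lemma spanL_0 l : spanL l 0v.
Proof. induction l; simpl; auto. exists 0, 0v. split; auto. now rewrite vscal_0, vadd_zero. Qed.

Lemma spanL_add l x y : spanL l x -> spanL l y -> spanL l (x +v y).
Proof.
  revert x y. induction l as [|v l IH]; simpl; intros x y.
  - intros -> ->. apply vadd_zero.
  - intros [t1 [u1 [h1 ->]]] [t2 [u2 [h2 ->]]]. exists (t1 + t2), (u1 +v u2). split; [apply IH; auto|].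
    rewrite vscal_addl. apply vadd_swap4.
Qed.

Lemma spanL_scal l a x : spanL l x -> spanL l (a *v x).
Proof.
  revert x. induction l as [|v l IH]; simpl; intros x.
  - intros ->. apply vscal_z.
  - intros [t [u [h ->]]]. exists (a * t), (a *v u). split; [apply IH; auto|]. rewrite vscal_addr, vscal_assoc. auto.
Qed.

Lemma spanL_cons l v u : spanL l u -> spanL (v :: l) u.
Proof. intros h. simpl. exists 0, u. split; auto. now rewrite vscal_0, vadd_zero. Qed.

Lemma spanL_in l v : In v l -> spanL l v.
Proof.
  induction l as [|w l IH]; simpl; [tauto|]. intros [<-|h].
  - exists 1, 0v. split. apply spanL_0. now rewrite vscal_one, vadd_0l.
  - apply spanL_cons. auto.
Qed.

Lemma vopp_add a b : vopp V (a +v b) = vopp V a +v vopp V b.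
Proof. rewrite !vopp_eq. apply vscal_addr. Qed.

Lemma vsub_addadd a b c d : vsub V (a +v b) (c +v d) = vsub V a c +v vsub V b d.
Proof. unfold vsub. rewrite vopp_add. apply vadd_swap4. Qed.

Lemma vsub_scal t a b : vsub V (t *v a) (t *v b) = t *v vsub V a b.
Proof. unfold vsub. rewrite !vopp_eq, vscal_addr, !vscal_assoc. f_equal. f_equal. ring. Qed.

Lemma vsub_scal2 t s v : vsub V (t *v v) (s *v v) = (t - s) *v v.
Proof. unfold vsub. rewrite vopp_eq, vscal_assoc, <- vscal_addl. f_equal. ring. Qed.

Lemma vsub_tri a b c : vsub V a c = vsub V a b +v vsub V b c.
Proof.
  unfold vsub. rewrite <- vadd_assoc, (vadd_assoc _ (vopp V b)), (vadd_comm _ (vopp V b) b), vadd_opp, vadd_0l.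
  reflexivity.
Qed.

Lemma vsub_addr a b : vsub V (a +v b) b = a.
Proof. unfold vsub. rewrite <- vadd_assoc, vadd_opp, vadd_zero. reflexivity. Qed.

Lemma vsub_same a : vsub V a a = 0v.
Proof. apply vadd_opp. Qed.

Lemma vsub_norm_tri a b c : nm (vsub V a c) <= nm (vsub V a b) + nm (vsub V b c).
Proof. rewrite (vsub_tri a b c). apply vnorm_triangle. Qed.

Lemma TB l : forall r delta, delta > 0 -> exists N : list V,
  (forall n, In n N -> spanL l n) /\
  forall w, spanL l w -> nm w <= r -> exists n, In n N /\ nm (vsub V w n) < delta.
Proof.
  induction l as [|v l IH]; intros r delta hd.
  - exists (0v :: nil). split.
    + intros n [<-|[]]. simpl; auto.
    + intros w hw _. simpl in hw. subst w. exists 0v. split; [left; auto|].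
      rewrite vsub_same, vnorm_0. lra.
  - destruct (classic (forall eta, eta > 0 -> exists u, spanL l u /\ nm (vsub V v u) < eta)) as [hA|hB].
    + destruct (IH (r + delta/2) (delta/2) ltac:(lra)) as [N [hN1 hN2]]. exists N. split.
      { intros n hn. apply spanL_cons; auto. }
      intros w [t [u [hu ->]]] hw.
      destruct (hA (delta / (2 * (Rabs t + 1)))) as [u' [hu' hu'n]].
      { pose proof (Rabs_pos t). apply Rdiv_lt_0_compat; lra. }
      set (w' := u +v t *v u').
      assert (hw' : spanL l w') by (apply spanL_add; auto; apply spanL_scal; auto).
      assert (d1 : nm (vsub V (u +v t *v v) w') < delta / 2).
      { unfold w'. rewrite vsub_addadd, vsub_same, vadd_0l, vsub_scal, vnorm_scal.
        pose proof (Rabs_pos t). pose proof (vnorm_ge0 V (vsub V v u')).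
        apply Rle_lt_trans with (Rabs t * (delta / (2 * (Rabs t + 1)))).
        - apply Rmult_le_compat_l; lra.
        - apply Rlt_le_trans with ((Rabs t + 1) * (delta / (2 * (Rabs t + 1)))).
          + apply Rmult_lt_compat_r; [apply Rdiv_lt_0_compat|]; lra.
          + right. field. lra. }
      assert (nw' : nm w' <= r + delta / 2).
      { pose proof (vnorm_rev V w' (u +v t *v v)). rewrite vsub_sym_norm in H. lra. }
      destruct (hN2 w' hw' nw') as [n [hn hn2]]. exists n. split; auto.
      pose proof (vsub_norm_tri (u +v t *v v) w' n). lra.
    + assert (hB' : exists eta, eta > 0 /\ forall u, spanL l u -> nm (vsub V v u) >= eta).
      { apply NNPP. intros c. apply hB. intros eta he. apply NNPP. intros c2. apply c.
        exists eta. split; auto. intros u hu. destruct (Rge_dec (nm (vsub V v u)) eta); auto.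
        exfalso. apply c2. exists u. split; auto. lra. }
      destruct hB' as [eta [he heta]].
      assert (key : forall t u, spanL l u -> Rabs t * eta <= nm (u +v t *v v)).
      { intros t u hu. destruct (Req_dec t 0) as [->|nt].
        - rewrite Rabs_R0, Rmult_0_l. apply vnorm_ge0.
        - assert (e : u +v t *v v = t *v vsub V v ((- / t) *v u)).
          { unfold vsub. rewrite vopp_eq, vscal_assoc, vscal_addr, vscal_assoc.
            replace (t * (-1 * - / t)) with 1 by (field; auto). rewrite vscal_one. apply vadd_comm. }
          rewrite e, vnorm_scal. apply Rmult_le_compat_l. apply Rabs_pos.
          pose proof (heta ((- / t) *v u) (spanL_scal l _ _ hu)). lra. }
      set (K := Rabs r / eta).
      set (R' := Rabs r + K * nm v).
      destruct (IH R' (delta/2) ltac:(lra)) as [N [hN1 hN2]].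
      destruct (grid K (delta / (2 * (nm v + 1)))) as [G hG].
      { pose proof (vnorm_ge0 V v). apply Rdiv_lt_0_compat; lra. }
      exists (flat_map (fun n => map (fun s => n +v s *v v) G) N). split.
      { intros m hm. apply in_flat_map in hm. destruct hm as [n [hn hm]].
        apply in_map_iff in hm. destruct hm as [s [<- _]]. simpl. exists s, n. auto. }
      intros w [t [u [hu ->]]] hw.
      pose proof (key t u hu) as kt. pose proof (Rle_abs r).
      assert (htK : Rabs t <= K).
      { unfold K. apply Rmult_le_reg_r with eta; auto. unfold Rdiv. rewrite Rmult_assoc, Rinv_l by lra. lra. }
      assert (hun : nm u <= R').
      { rewrite <- (vsub_addr u (t *v v)). eapply Rle_trans; [apply vnorm_triangle|].
        rewrite vnorm_opp, vnorm_scal. unfold R'. pose proof (vnorm_ge0 V v).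
        assert (Rabs t * nm v <= K * nm v) by (apply Rmult_le_compat_r; auto). lra. }
      destruct (hN2 u hu hun) as [n [hn hn2]].
      destruct (hG t htK) as [s [hs hs2]].
      exists (n +v s *v v). split.
      { apply in_flat_map. exists n. split; auto. apply in_map_iff. exists s; auto. }
      rewrite vsub_addadd. eapply Rle_lt_trans; [apply vnorm_triangle|].
      rewrite vsub_scal2, vnorm_scal. pose proof (vnorm_ge0 V v).
      assert (Rabs (t - s) * nm v < delta / 2).
      { apply Rle_lt_trans with (Rabs (t - s) * (nm v + 1)).
        - apply Rmult_le_compat_l; [apply Rabs_pos|lra].
        - apply Rlt_le_trans with (delta / (2 * (nm v + 1)) * (nm v + 1)).
          + apply Rmult_lt_compat_r; lra.
          + right; field; lra. }
      lra.
Qed.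
End Span.

Section InSpan.
Variable Y : NormedSpace.
Definition fsum (cv : list (R * Y)) : Y :=
  fold_right (fun p acc => vadd Y (vscal Y (fst p) (snd p)) acc) (vzero Y) cv.

Lemma fsum_app c1 c2 : fsum (c1 ++ c2) = vadd Y (fsum c1) (fsum c2).
Proof.
  induction c1 as [|p c1 IH]; simpl.
  - symmetry; apply vadd_0l.
  - unfold fsum in *. simpl. rewrite IH. apply vadd_assoc.
Qed.

Lemma fsum_scal a cv : fsum (map (fun p => (a * fst p, snd p)) cv) = vscal Y a (fsum cv).
Proof.
  induction cv as [|p cv IH]; simpl.
  - symmetry; apply vscal_z.
  - unfold fsum in *. simpl. rewrite IH, vscal_addr, vscal_assoc. reflexivity.
Qed.

Definition ispan F y := in_span (vzero Y) (vadd Y) (vscal Y) F y.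

Lemma ispan_0 F : ispan F (vzero Y).
Proof. exists nil. split; auto. Qed.

Lemma ispan_in F y : In y F -> ispan F y.
Proof. intros h. exists ((1, y) :: nil). split. constructor; auto. simpl. now rewrite vscal_one, vadd_zero. Qed.

Lemma ispan_add F a b : ispan F a -> ispan F b -> ispan F (vadd Y a b).
Proof.
  intros [c1 [h1 ->]] [c2 [h2 ->]]. exists (c1 ++ c2). split.
  - apply Forall_app; auto.
  - symmetry. apply fsum_app.
Qed.

Lemma ispan_scal F t a : ispan F a -> ispan F (vscal Y t a).
Proof.
  intros [c [h ->]]. exists (map (fun p => (t * fst p, snd p)) c). split.
  - apply Forall_map. eapply Forall_impl; [|exact h]. simpl. auto.
  - symmetry. apply fsum_scal.
Qed.
End InSpan.

Lemma choose_list {A B} (P : A -> B -> Prop) (N : list A) :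
  (forall a, In a N -> exists b, P a b) -> exists bs : list B, forall a, In a N -> exists b, In b bs /\ P a b.
Proof.
  induction N as [|a N IH]; intros h.
  - exists nil. intros a [].
  - destruct (h a (or_introl eq_refl)) as [b hb]. destruct IH as [bs hbs].
    { intros a' ha'. apply h. right; auto. }
    exists (b :: bs). intros a' [<-|ha'].
    + exists b. split; [left|]; auto.
    + destruct (hbs a' ha') as [b' [h1 h2]]. exists b'. split; [right|]; auto.
Qed.

Lemma unit_reduce (V : NormedSpace) (P : V -> Prop) (s : V) (c : R) :
  vnorm V s = 1 -> c <= 1 -> (forall a w, P w -> P (vscal V a w)) ->
  (forall w mu, P w -> vnorm V w = 1 -> vnorm V (vadd V w (vscal V mu s)) >= c * (1 + Rabs mu)) ->
  forall w lam, P w -> vnorm V (vadd V w (vscal V lam s)) >= c * (vnorm V w + Rabs lam).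
Proof.
  intros hs hc hP hu w lam hw. pose proof (vnorm_ge0 V w) as h0.
  destruct (Req_dec (vnorm V w) 0) as [e|ne].
  - apply vnorm_eq0 in e. subst w. rewrite vadd_0l, vnorm_scal, hs, vnorm_0.
    pose proof (Rabs_pos lam). nra.
  - set (r := vnorm V w) in *. assert (rp : r > 0) by lra.
    set (w1 := vscal V (/ r) w).
    assert (hw1 : vnorm V w1 = 1).
    { unfold w1. rewrite vnorm_scal, Rabs_right. fold r. field. lra. left. apply Rinv_0_lt_compat; lra. }
    pose proof (hu w1 (lam / r) (hP _ _ hw) hw1) as h.
    assert (e : vadd V w (vscal V lam s) = vscal V r (vadd V w1 (vscal V (lam / r) s))).
    { unfold w1. rewrite vscal_addr, !vscal_assoc. replace (r * / r) with 1 by (field; lra).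
      replace (r * (lam / r)) with lam by (field; lra). now rewrite vscal_one. }
    rewrite e, vnorm_scal, Rabs_right by lra.
    unfold Rdiv in h. rewrite Rabs_mult, Rabs_inv, (Rabs_right r) in h by lra.
    apply Rmult_ge_compat_l with (r := r) in h; [|lra].
    replace (r * (c * (1 + Rabs lam * / r))) with (c * (r + Rabs lam)) in h by (field; lra). lra.
Qed.

Definition lift (X Y : NormedSpace) (T : X -> Y) : OpSpace X Y :=
  match excluded_middle_informative (bounded_linear X Y T) with
  | left h => exist _ T h
  | right _ => bl_zero X Y
  end.

Lemma lift_val (X Y : NormedSpace) (T : X -> Y) : bounded_linear X Y T -> proj1_sig (lift X Y T) = T.
Proof. intros h. unfold lift. destruct excluded_middle_informative; [reflexivity|contradiction]. Qed.

Lemma span_conv (X Y : NormedSpace) (H : (X -> Y) -> Prop) (hb : forall T, H T -> bounded_linear X Y T) l x :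
  Forall H l -> in_span (op_zero X Y) (op_add X Y) (op_scal X Y) l x ->
  exists w : OpSpace X Y, spanL _ (map (lift X Y) l) w /\ proj1_sig w = x.
Proof.
  intros hl [cv [hcv ->]]. induction cv as [|[a T] cv IH].
  - exists (vzero (OpSpace X Y)). split. apply spanL_0. reflexivity.
  - inversion hcv as [|? ? hT hcv']; subst. simpl in hT.
    destruct (IH hcv') as [w' [hw' he]].
    exists (vadd (OpSpace X Y) (vscal (OpSpace X Y) a (lift X Y T)) w'). split.
    + apply spanL_add; auto. apply spanL_scal. apply spanL_in. apply in_map; auto.
    + simpl. rewrite he. rewrite lift_val. reflexivity.
      apply hb. rewrite Forall_forall in hl. auto.
Qed.

Lemma span_eval (X Y : NormedSpace) (l : list (X -> Y)) (xs : list X) x :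
  Forall (bounded_linear X Y) l -> In x xs ->
  forall l0, (forall T, In T l0 -> In T l) -> forall w, spanL (OpSpace X Y) (map (lift X Y) l0) w ->
  ispan Y (flat_map (fun T => map (fun x => T x) xs) l) (proj1_sig w x).
Proof.
  intros hl hx l0. induction l0 as [|T l0 IH]; intros hsub w hw.
  - simpl in hw. subst w. apply ispan_0.
  - simpl in hw. destruct hw as [t [u [hu ->]]]. simpl. unfold op_add, op_scal.
    apply ispan_add.
    + apply IH; auto. intros T' h'. apply hsub. right; auto.
    + apply ispan_scal. rewrite lift_val.
      * apply ispan_in. apply in_flat_map. exists T. split. apply hsub; left; auto.
        apply in_map_iff. exists x; auto.
      * rewrite Forall_forall in hl. apply hl, hsub. left; auto.
Qed.

Theorem mainTheorem4 (X Y : NormedSpace) (H : (X -> Y) -> Prop) :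
  Banach X -> Banach Y ->
  octahedral Y ->
  (exists f : X -> R, is_dual X f /\ dnorm X f = 1 /\ numidx_dual X f = 1) ->
  closed_subspace_L X Y H ->
  (forall T, in_tensor X Y T -> H T) ->
  octahedral_in (op_zero X Y) (@op_add X Y) (@op_scal X Y) (@opnorm X Y) H.
Proof.
  intros _ _ octY [f [hf [hf1 hn]]] [hb _] hTen l eps hl heps.
  set (eps' := Rmin (eps/2) (1/2)). set (d := Rmin (eps/8) (1/8)).
  assert (he1 : eps' <= eps/2) by apply Rmin_l. assert (he2 : eps' <= 1/2) by apply Rmin_r.
  assert (hd1 : d <= eps/8) by apply Rmin_l. assert (hd2 : d <= 1/8) by apply Rmin_r.
  assert (he0 : eps' > 0) by (apply Rmin_glb_lt; lra).
  assert (hd0 : d > 0) by (apply Rmin_glb_lt; lra).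
  set (lb := map (lift X Y) l).
  destruct (TB (OpSpace X Y) lb 1 d hd0) as [N [hN1 hN2]].
  destruct (choose_list (fun (n : OpSpace X Y) x => vnorm X x <= 1 /\ f x >= 1 - d /\
       vnorm Y (proj1_sig n x) >= opnorm X Y (proj1_sig n) - d) N) as [xs hxs].
  { intros n _. apply (norming X Y f hf hf1 hn); auto. exact (proj2_sig n). }
  set (F := flat_map (fun T => map (fun x => T x) xs) l).
  destruct (octY F eps') as [y [_ [hy1 hy]]]; auto.
  { apply Forall_forall. auto. }
  set (S := fun x => vadd Y (vscal Y (f x) y) (vzero Y)).
  assert (hSx : forall x, vnorm Y (S x) = Rabs (f x)).
  { intros x. unfold S. rewrite vadd_zero, vnorm_scal, hy1. ring. }
  assert (hSbl : bounded_linear X Y S).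
  { split.
    - intros a b x1 x2. unfold S. rewrite !vadd_zero, (proj1 hf), vscal_addl, !vscal_assoc. reflexivity.
    - exists 1. intros x. rewrite hSx. pose proof (opnorm_bound X RN f x hf) as h.
      change (Rabs (f x) <= dnorm X f * vnorm X x) in h. rewrite hf1 in h. exact h. }
  assert (hS1 : opnorm X Y S = 1).
  { apply Rle_antisym.
    - apply opnorm_le. intros x hx. rewrite hSx. rewrite <- hf1. apply dual_ub; auto.
    - apply Rnot_lt_le. intros c.
      destruct (dnorm_approx X f (1 - opnorm X Y S) hf ltac:(lra)) as [x [hx hfx]].
      pose proof (opnorm_ub X Y S x hSbl hx). rewrite hSx in H0. lra. }
  exists S. split; [|split].
  { apply hTen. exists ((f, y) :: nil). split.
    - constructor; auto.
    - intros x. reflexivity. }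
  { exact hS1. }
  intros x lam hx.
  destruct (span_conv X Y H hb l x hl hx) as [w [hw <-]].
  set (sO := exist _ S hSbl : OpSpace X Y).
  change (vnorm (OpSpace X Y) (vadd (OpSpace X Y) w (vscal (OpSpace X Y) lam sO)) >=
          (1 - eps) * (vnorm (OpSpace X Y) w + Rabs lam)).
  apply (unit_reduce (OpSpace X Y) (spanL _ lb) sO (1 - eps)); auto; [lra| |].
  { intros a w0 h. apply spanL_scal; auto. }
  intros w0 mu hw0 hw01.
  destruct (hN2 w0 hw0 ltac:(lra)) as [n [hnN hn2]].
  destruct (hxs n hnN) as [x0 [hx0in [hx01 [hfx0 hnx0]]]].
  assert (hnn : vnorm (OpSpace X Y) n >= 1 - d).
  { pose proof (vnorm_rev _ w0 n). lra. }
  change (opnorm X Y (proj1_sig n)) with (vnorm (OpSpace X Y) n) in hnx0.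
  set (A := vadd (OpSpace X Y) w0 (vscal (OpSpace X Y) mu sO)).
  set (B := vadd (OpSpace X Y) n (vscal (OpSpace X Y) mu sO)).
  assert (hAB : vnorm _ A >= vnorm _ B - vnorm _ (vsub _ w0 n)).
  { pose proof (vnorm_rev _ B A) as h. rewrite vsub_sym_norm in h.
    unfold A, B in h. rewrite vsub_addadd, vsub_same, vadd_zero in h. unfold A, B. lra. }
  assert (hBx : vnorm Y (proj1_sig B x0) <= vnorm _ B).
  { apply (opnorm_ub X Y (proj1_sig B) x0 (proj2_sig B) hx01). }
  assert (eB : proj1_sig B x0 = vadd Y (proj1_sig n x0) (vscal Y (mu * f x0) y)).
  { simpl. unfold op_add, op_scal, S. rewrite vadd_zero, vscal_assoc. reflexivity. }
  assert (hsp : ispan Y F (proj1_sig n x0)).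
  { assert (hlb : Forall (bounded_linear X Y) l).
    { apply Forall_forall. intros T hT. apply hb. rewrite Forall_forall in hl. auto. }
    exact (span_eval X Y l xs x0 hlb hx0in l (fun T h => h) n (hN1 n hnN)). }
  pose proof (hy _ (mu * f x0) hsp) as hoct.
  rewrite <- eB in hoct.
  assert (hfm : Rabs (mu * f x0) >= Rabs mu * (1 - d)).
  { rewrite Rabs_mult. rewrite (Rabs_right (f x0)) by lra. pose proof (Rabs_pos mu).
    apply Rle_ge, Rmult_le_compat_l; lra. }
  pose proof (Rabs_pos mu) as hm.
  set (m := Rabs mu) in *. set (nx := vnorm Y (proj1_sig n x0)) in *.
  set (q := Rabs (mu * f x0)) in *.
  assert (h1 : (1 - eps') * (nx + q) >= (1 - eps') * ((1 - 2 * d) + m * (1 - d))).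
  { apply Rle_ge, Rmult_le_compat_l; lra. }
  assert (h2 : (1 - eps') * ((1 - 2 * d) + m * (1 - d)) >= (1 - eps') * (1 - 2 * d) * (1 + m)).
  { assert (0 <= (1 - eps') * (m * d)) by (apply Rmult_le_pos; [lra|apply Rmult_le_pos; lra]). nra. }
  assert (h3 : (1 - eps') * (1 - 2 * d) * (1 + m) >= (1 - eps' - 2 * d) * (1 + m)).
  { assert (0 <= eps' * (2 * d) * (1 + m)) by (repeat apply Rmult_le_pos; lra). nra. }
  assert (h4 : d <= d * (1 + m)) by nra.
  assert (h5 : (1 - eps' - 2 * d) * (1 + m) - d * (1 + m) >= (1 - eps) * (1 + m)) by nra.
  unfold A in *. lra.
Qed.
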